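(* Let $X$ be a special (abstract) rank one group with abelian unipotent subgroups $A$ and $B$, and set $H = N_X(A) \cap N_X(B)$. If $|A| \geq 4$, then $A = [A,H]$.
   Context: For a group $X$ and $g,x \in X$, write $x^g = g^{-1}xg$, $A^g = g^{-1}Ag$, and $[x,g] = x^{-1}g^{-1}xg$; $[A,H]$ denotes the subgroup generated by all $[a,h]$ with $a \in A$, $h \in H$. A group $X$ is an (abstract) rank one group with abelian unipotent subgroups $A$ and $B$ if $X = \langle A, B\rangle$ where $A$ and $B$ are different abelian subgroups of $X$ such that for each $1 \neq a \in A$ there is an element $1 \neq b \in B$ with $A^b = B^a$, and for each $1 \neq b \in B$ there is an element $1 \neq a \in A$ with $B^a = A^b$. In such a group, for each $1 \neq a \in A$ the element $1 \neq b \in B$ with $A^b = B^a$ is uniquely determined and is denoted $b(a)$. The group $X$ is called special if $b(a^{-1}) = b(a)^{-1}$ for all $1 \neq a \in A$. *)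

(* Defs.v *)
Record group := Group {
  carrier :> Type;
  gmul : carrier -> carrier -> carrier;
  ginv : carrier -> carrier;
  gone : carrier;
  gmulA : forall x y z, gmul x (gmul y z) = gmul (gmul x y) z;
  gmul1 : forall x, gmul gone x = x;
  gmulV : forall x, gmul (ginv x) x = gone
}.

Section Defs.
Variable X : group.

Definition subset := X -> Prop.

Definition set_eq (P Q : subset) : Prop := forall x, P x <-> Q x.

Definition conj (x g : X) : X := gmul X (gmul X (ginv X g) x) g.

Definition conjset (A : subset) (g : X) : subset :=
  fun y => exists a, A a /\ y = conj a g.

Definition comm (x g : X) : X :=
  gmul X (gmul X (gmul X (ginv X x) (ginv X g)) x) g.

Definition is_subgroup (S : subset) : Prop :=
  S (gone X) /\
  (forall x y, S x -> S y -> S (gmul X x y)) /\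
  (forall x, S x -> S (ginv X x)).

Definition generated (S : subset) : subset :=
  fun x => forall K, is_subgroup K -> (forall s, S s -> K s) -> K x.

Definition is_abelian_subgroup (A : subset) : Prop :=
  is_subgroup A /\ forall x y, A x -> A y -> gmul X x y = gmul X y x.

Definition normalizer (A : subset) : subset :=
  fun g => set_eq (conjset A g) A.

Definition commsub (A H : subset) : subset :=
  generated (fun x => exists a h, A a /\ H h /\ x = comm a h).

Definition rank_one (A B : subset) : Prop :=
  is_abelian_subgroup A /\ is_abelian_subgroup B /\
  ~ set_eq A B /\
  set_eq (generated (fun x => A x \/ B x)) (fun _ => True) /\
  (forall a, A a -> a <> gone X ->
     exists b, B b /\ b <> gone X /\ set_eq (conjset A b) (conjset B a)) /\
  (forall b, B b -> b <> gone X ->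
     exists a, A a /\ a <> gone X /\ set_eq (conjset B a) (conjset A b)).

(* special: b(a^-1) = b(a)^-1, where b(a) is the (unique) 1 <> b in B with
   A^b = B^a.  Stated as: whenever b is (the) b(a) and b' is (the) b(a^-1),
   then b' = b^-1. *)
Definition special (A B : subset) : Prop :=
  forall a b, A a -> a <> gone X -> B b -> b <> gone X ->
    set_eq (conjset A b) (conjset B a) ->
    forall b', B b' -> b' <> gone X ->
      set_eq (conjset A b') (conjset B (ginv X a)) ->
      b' = ginv X b.

Definition card_ge4 (A : subset) : Prop :=
  exists a1 a2 a3 a4, A a1 /\ A a2 /\ A a3 /\ A a4 /\
    a1 <> a2 /\ a1 <> a3 /\ a1 <> a4 /\ a2 <> a3 /\ a2 <> a4 /\ a3 <> a4.

End Defs.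

(* Main.v *)
Require Import Defs.
From Stdlib Require Import Classical Setoid.

Local Notation "x ** y" := (gmul _ x y) (at level 40, left associativity).
Local Notation inv := (ginv _).

Lemma mulA_r {X : group} (x y z : X) : (x ** y) ** z = x ** (y ** z).
Proof. symmetry; apply gmulA. Qed.
Lemma mulV_l {X : group} (x : X) : inv x ** x = gone X. Proof. apply gmulV. Qed.
Lemma mul1_l {X : group} (x : X) : gone X ** x = x. Proof. apply gmul1. Qed.
Lemma mulVK {X : group} (x y : X) : inv x ** (x ** y) = y.
Proof. rewrite gmulA, mulV_l, mul1_l. reflexivity. Qed.
Lemma mulV_r {X : group} (x : X) : x ** inv x = gone X.
Proof.
  transitivity (inv (inv x) ** (inv x ** (x ** inv x))).
  - rewrite gmulA, mulV_l, mul1_l. reflexivity.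
  - rewrite (mulVK x (inv x)). apply mulV_l.
Qed.
Lemma mul1_r {X : group} (x : X) : x ** gone X = x.
Proof. rewrite <- (mulV_l x), gmulA, mulV_r, mul1_l. reflexivity. Qed.
Lemma mulKV {X : group} (x y : X) : x ** (inv x ** y) = y.
Proof. rewrite gmulA, mulV_r, mul1_l. reflexivity. Qed.
Lemma inv_uniq {X : group} (x y : X) : x ** y = gone X -> inv y = x.
Proof.
  intro H. rewrite <- (mul1_r x), <- (mulV_r y), gmulA, H, mul1_l. reflexivity.
Qed.
Lemma inv_inv {X : group} (x : X) : inv (inv x) = x.
Proof. apply inv_uniq, mulV_r. Qed.
Lemma inv_mul {X : group} (x y : X) : inv (x ** y) = inv y ** inv x.
Proof. apply inv_uniq. rewrite !mulA_r, mulVK, mulV_l. reflexivity. Qed.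
Lemma inv1 {X : group} : inv (gone X) = gone X.
Proof. apply inv_uniq, mul1_l. Qed.

Ltac gsimpl := repeat progress (rewrite ?mulA_r, ?inv_mul, ?inv_inv, ?inv1, ?mulVK,
  ?mulKV, ?mulV_r, ?mulV_l, ?mul1_l, ?mul1_r).

Lemma conj_mul {X : group} (x y g : X) : conj X (x ** y) g = conj X x g ** conj X y g.
Proof. unfold conj; gsimpl; reflexivity. Qed.
Lemma conj_comp {X : group} (x g h : X) : conj X (conj X x g) h = conj X x (g ** h).
Proof. unfold conj; gsimpl; reflexivity. Qed.
Lemma conj_inv {X : group} (x g : X) : conj X (inv x) g = inv (conj X x g).
Proof. unfold conj; gsimpl; reflexivity. Qed.
Lemma conj_one {X : group} (x : X) : conj X x (gone X) = x.
Proof. unfold conj; gsimpl; reflexivity. Qed.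
Lemma conj_self {X : group} (g : X) : conj X g g = g.
Proof. unfold conj; gsimpl; reflexivity. Qed.

Definition M {X : group} (S : X -> Prop) (g : X) (T : X -> Prop) :=
  forall y, S y <-> T (conj X y g).

Lemma M_comp {X : group} S T U (g h : X) : M S g T -> M T h U -> M S (g ** h) U.
Proof. intros H1 H2 y. rewrite (H1 y), (H2 _), conj_comp. reflexivity. Qed.
Lemma M_inv {X : group} S T (g : X) : M S g T -> M T (inv g) S.
Proof. intros H y. rewrite (H _), conj_comp, mulV_l, conj_one. reflexivity. Qed.
Lemma M_sub {X : group} S (g : X) : is_subgroup X S -> S g -> M S g S.
Proof.
  intros [H1 [Hm Hi]] Hg y; split; intro Hy.
  - unfold conj. apply Hm; auto.
  - assert (E : y = (g ** conj X y g) ** inv g) by (unfold conj; gsimpl; reflexivity).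
    rewrite E. apply Hm; auto.
Qed.
Lemma cs_iff {X : group} S (g x : X) : conjset X S g x <-> S (conj X x (inv g)).
Proof.
  unfold conjset; split.
  - intros [a [Ha ->]]. rewrite conj_comp, mulV_r, conj_one. exact Ha.
  - intro H. exists (conj X x (inv g)). split; auto.
    rewrite conj_comp, mulV_l, conj_one; reflexivity.
Qed.
Lemma M_SE {X : group} S T (g : X) : set_eq X (conjset X S g) T <-> M S g T.
Proof.
  unfold set_eq, M. split; intros H y.
  - rewrite <- (H (conj X y g)), cs_iff, conj_comp, mulV_r, conj_one. reflexivity.
  - rewrite cs_iff, (H _), conj_comp, mulV_l, conj_one. reflexivity.
Qed.
Lemma M_SE2 {X : group} S T (g h : X) :
  set_eq X (conjset X S g) (conjset X T h) <-> M S (g ** inv h) T.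
Proof.
  rewrite M_SE. unfold M. split; intros H y.
  - rewrite (H y), cs_iff, conj_comp. reflexivity.
  - rewrite cs_iff, conj_comp. apply H.
Qed.

Lemma gen_sub {X : group} (S : X -> Prop) : is_subgroup X (generated X S).
Proof.
  unfold generated; split; [|split].
  - intros K [H1 _] _; exact H1.
  - intros x y Hx Hy K HK HS. destruct HK as [H1 [Hm Hi]].
    apply Hm; [apply Hx | apply Hy]; auto; split; auto.
  - intros x Hx K HK HS. destruct HK as [H1 [Hm Hi]].
    apply Hi; apply Hx; auto; split; auto.
Qed.
Lemma gen_in {X : group} (S : X -> Prop) x : S x -> generated X S x.
Proof. intros Hx K _ HS; auto. Qed.


Lemma subA {X : group} A B : rank_one X A B -> is_subgroup X A.
Proof. intros (HA & _). apply HA. Qed.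
Lemma subB {X : group} A B : rank_one X A B -> is_subgroup X B.
Proof. intros (_ & HB & _). apply HB. Qed.
Lemma abA {X : group} A B (x y : X) : rank_one X A B -> A x -> A y -> x ** y = y ** x.
Proof. intros (HA & _) Hx Hy. apply (proj2 HA); auto. Qed.

Lemma beta {X : group} A B (a : X) : rank_one X A B -> A a -> a <> gone X ->
  exists b, B b /\ b <> gone X /\ M A (b ** inv a) B.
Proof.
  intros HR Ha Hna. destruct HR as (_ & _ & _ & _ & H1 & _).
  destruct (H1 a Ha Hna) as [b [Hb [Hnb HE]]]. exists b. rewrite M_SE2 in HE. auto.
Qed.
Lemma alpha {X : group} A B (b : X) : rank_one X A B -> B b -> b <> gone X ->
  exists a, A a /\ a <> gone X /\ M B (a ** inv b) A.
Proof.
  intros HR Hb Hnb. destruct HR as (_ & _ & _ & _ & _ & H2).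
  destruct (H2 b Hb Hnb) as [a [Ha [Hna HE]]]. exists a. rewrite M_SE2 in HE. auto.
Qed.
Lemma special_M {X : group} A B (a b b' : X) : special X A B ->
  A a -> a <> gone X -> B b -> b <> gone X -> M A (b ** inv a) B ->
  B b' -> b' <> gone X -> M A (b' ** a) B -> b' = inv b.
Proof.
  intros HS Ha Hna Hb Hnb H Hb' Hnb' H'.
  apply (HS a b Ha Hna Hb Hnb); auto.
  - apply M_SE2; auto.
  - apply M_SE2. rewrite inv_inv. auto.
Qed.

Lemma F1 {X : group} A B (a : X) : rank_one X A B -> A a -> M B a B -> a = gone X.
Proof.
  intros HR Ha H. destruct (classic (a = gone X)) as [E|Hna]; auto.
  destruct (beta A B a HR Ha Hna) as [b [Hb [Hnb Hab]]].
  pose proof (M_comp _ _ _ _ _ Hab H) as H2.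
  pose proof (M_comp _ _ _ _ _ H2 (M_sub _ _ (subB A B HR) (proj2 (proj2 (subB A B HR)) b Hb))) as H3.
  replace (((b ** inv a) ** a) ** inv b) with (gone X) in H3 by (gsimpl; reflexivity).
  exfalso. destruct HR as (_ & _ & Hne & _). apply Hne. intro x.
  rewrite (H3 x), conj_one. reflexivity.
Qed.
Lemma F1' {X : group} A B (u v : X) : rank_one X A B -> A u -> A v ->
  M B (u ** inv v) B -> u = v.
Proof.
  intros HR Hu Hv H.
  assert (HA := subA A B HR). destruct HA as [_ [Hm Hi]].
  pose proof (F1 A B _ HR (Hm _ _ Hu (Hi _ Hv)) H) as E.
  rewrite <- (mul1_r u), <- (mulV_l v), gmulA, E, mul1_l. reflexivity.
Qed.

Lemma swap {X : group} A B (a b : X) : rank_one X A B -> special X A B ->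
  A a -> a <> gone X -> B b -> b <> gone X -> M A (b ** inv a) B ->
  M A ((a ** inv b) ** a) B /\ M B ((a ** inv b) ** a) A.
Proof.
  intros HR HS Ha Hna Hb Hnb H.
  assert (HA := subA A B HR). destruct (HA) as [H1 [Hm Hi]].
  assert (Hia : A (inv a)) by auto.
  assert (Hnia : inv a <> gone X).
  { intro E. apply Hna. rewrite <- (inv_inv a), E, inv1. reflexivity. }
  destruct (beta A B (inv a) HR Hia Hnia) as [b' [Hb' [Hnb' H']]].
  rewrite inv_inv in H'.
  assert (Eb := special_M A B a b b' HS Ha Hna Hb Hnb H Hb' Hnb' H'). subst b'.
  split.
  - rewrite mulA_r. apply (M_comp _ A); auto. apply M_sub; auto.
  - apply (M_comp _ A). 2: apply M_sub; auto.
    pose proof (M_inv _ _ _ H) as H2. rewrite inv_mul, inv_inv in H2. exact H2.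
Qed.

Lemma braid {X : group} A B (a b mu : X) : rank_one X A B -> special X A B ->
  A a -> a <> gone X -> B b -> b <> gone X -> M A (b ** inv a) B ->
  mu = (a ** inv b) ** a -> conj X (inv b) mu = a.
Proof.
  intros HR HS Ha Hna Hb Hnb H Hmu.
  destruct (swap A B a b HR HS Ha Hna Hb Hnb H) as [HAm HBm]. rewrite <- Hmu in HAm, HBm.
  assert (HA := subA A B HR). destruct (HA) as [H1 [Hm Hi]].
  assert (HB := subB A B HR). destruct (HB) as [H1b [Hmb Hib]].
  remember (conj X (inv b) mu) as c eqn:Hc.
  remember (conj X a mu) as d eqn:Hd.
  assert (Hc' : A c) by (rewrite Hc; apply HBm; auto).
  assert (Hd' : B d) by (rewrite Hd; apply HAm; auto).
  assert (Hmu2 : mu = (d ** c) ** d).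
  { assert (E : conj X ((a ** inv b) ** a) mu = (d ** c) ** d)
      by (rewrite Hc, Hd, !conj_mul; reflexivity).
    rewrite <- Hmu, conj_self in E. exact E. }
  assert (Ha2 : a = (mu ** d) ** inv mu) by (rewrite Hd; unfold conj; gsimpl; reflexivity).
  assert (P1 : M B (c ** d) A).
  { rewrite Hmu2 in HBm.
    pose proof (M_comp _ _ _ _ _ (M_sub B (inv d) HB (Hib _ Hd')) HBm) as P.
    replace (inv d ** ((d ** c) ** d)) with (c ** d) in P by (gsimpl; reflexivity). exact P. }
  assert (P2 := M_inv _ _ _ P1). rewrite inv_mul in P2.
  assert (Pall : M B (((d ** (c ** d)) ** inv c) ** (inv d ** inv c)) B).
  { apply (M_comp _ A); auto. apply (M_comp _ A). 2: apply M_sub; auto.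
    apply (M_comp _ B); auto. apply M_sub; auto. }
  assert (E2 : a ** inv c = ((d ** (c ** d)) ** inv c) ** (inv d ** inv c)).
  { rewrite Ha2, Hmu2. gsimpl. reflexivity. }
  rewrite <- E2 in Pall.
  symmetry. apply (F1' A B); auto.
Qed.

Definition KK {X : group} (A B : X -> Prop) :=
  commsub X A (fun h => normalizer X A h /\ normalizer X B h).

Lemma K_comm {X : group} A B (u h : X) : A u -> M A h A -> M B h B -> KK A B (comm X u h).
Proof.
  intros Hu H1 H2. apply gen_in. exists u, h. unfold normalizer. rewrite !M_SE. auto.
Qed.
Lemma K_sub {X : group} (A B : X -> Prop) : is_subgroup X (KK A B).
Proof. apply gen_sub. Qed.
Lemma K_A {X : group} A B (x : X) : rank_one X A B -> KK A B x -> A x.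
Proof.
  intros HR Hx. assert (HA := subA A B HR). apply Hx; auto.
  intros s (u & h & Hu & [HnA _] & ->). unfold normalizer in HnA. rewrite M_SE in HnA.
  destruct HA as [H1 [Hm Hi]].
  replace (comm X u h) with (inv u ** conj X u h) by (unfold comm, conj; gsimpl; reflexivity).
  apply Hm; auto. apply (proj1 (HnA u)); auto.
Qed.

Lemma ii {X : group} A B (u bu g : X) : rank_one X A B -> special X A B ->
  A u -> u <> gone X -> B bu -> bu <> gone X -> M A (bu ** inv u) B ->
  M A g B -> M B g A -> exists k, KK A B k /\ conj X bu g = inv u ** k.
Proof.
  intros HR HS Hu Hnu Hb Hnb H HgA HgB.
  destruct (swap A B u bu HR HS Hu Hnu Hb Hnb H) as [HAm HBm].
  pose proof (braid A B u bu _ HR HS Hu Hnu Hb Hnb H eq_refl) as Hbr.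
  rewrite conj_inv in Hbr.
  assert (Hbr' : conj X bu ((u ** inv bu) ** u) = inv u) by (rewrite <- (inv_inv (conj X bu _)), Hbr; reflexivity).
  exists (comm X (inv u) (inv ((u ** inv bu) ** u) ** g)). split.
  - apply K_comm.
    + destruct (subA A B HR) as [_ [_ Hi]]. auto.
    + apply (M_comp _ B); auto. apply M_inv; auto.
    + apply (M_comp _ A); auto. apply M_inv; auto.
  - rewrite <- (mulKV ((u ** inv bu) ** u) g) at 1.
    rewrite <- conj_comp, Hbr'. unfold conj, comm. gsimpl. reflexivity.
Qed.

Lemma div1 {X : group} (u v : X) : u ** inv v = gone X -> u = v.
Proof. intro E. rewrite <- (mul1_r u), <- (mulV_l v), gmulA, E, mul1_l. reflexivity. Qed.

Definition E {X : group} (A B : X -> Prop) (u v : X) := KK A B (inv v ** u).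

Lemma E_refl {X : group} A B (u : X) : E A B u u.
Proof. unfold E. rewrite mulV_l. apply K_sub. Qed.
Lemma E_sym {X : group} A B (u v : X) : E A B u v -> E A B v u.
Proof.
  unfold E; intro H. destruct (K_sub A B) as [_ [_ Hi]].
  replace (inv u ** v) with (inv (inv v ** u)) by (gsimpl; reflexivity). auto.
Qed.
Lemma E_trans {X : group} A B (u v w : X) : E A B u v -> E A B v w -> E A B u w.
Proof.
  unfold E; intros H1 H2. destruct (K_sub A B) as [_ [Hm _]].
  replace (inv w ** u) with ((inv w ** v) ** (inv v ** u)) by (gsimpl; reflexivity). auto.
Qed.
Lemma E_mul {X : group} A B (u v u' v' : X) : rank_one X A B ->
  A u -> A v -> A u' -> A v' ->
  E A B u v -> E A B u' v' -> E A B (u ** u') (v ** v').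
Proof.
  unfold E; intros HR Hu Hv Hu' Hv' H1 H2. destruct (K_sub A B) as [_ [Hm _]].
  destruct (subA A B HR) as [_ [HmA HiA]].
  replace (inv (v ** v') ** (u ** u')) with ((inv v ** u) ** (inv v' ** u')); auto.
  transitivity (inv v' ** ((inv v ** u) ** u')).
  2: gsimpl; reflexivity.
  rewrite (gmulA _ (inv v ** u)), (gmulA _ (inv v')), (abA A B (inv v ** u) (inv v')); auto.
Qed.
Lemma E_inv {X : group} A B (u v : X) : rank_one X A B -> A u -> A v ->
  E A B u v -> E A B (inv u) (inv v).
Proof.
  unfold E; intros HR Hu Hv H. destruct (K_sub A B) as [_ [_ Hi]].
  destruct (subA A B HR) as [_ [HmA HiA]].
  rewrite inv_inv. rewrite <- (abA A B (inv u) v); auto.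
  replace (inv u ** v) with (inv (inv v ** u)) by (gsimpl; reflexivity). auto.
Qed.

Lemma Rp {X : group} A B (y a : X) : rank_one X A B -> special X A B ->
  A y -> A a -> y <> gone X -> a <> gone X -> y <> a -> E A B (y ** y) a.
Proof.
  intros HR HS Hy Ha Hny Hna Hya.
  assert (HA := subA A B HR). destruct (HA) as [H1 [Hm Hi]].
  assert (HB := subB A B HR). destruct (HB) as [H1b [Hmb Hib]].
  destruct (beta A B a HR Ha Hna) as [b [Hb [Hnb Hab]]].
  destruct (swap A B a b HR HS Ha Hna Hb Hnb Hab) as [HAm HBm].
  pose proof (braid A B a b _ HR HS Ha Hna Hb Hnb Hab eq_refl) as Hbr.
  set (mu := (a ** inv b) ** a) in *.
  assert (Hx : A (y ** inv a)) by auto.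
  assert (Hnx : y ** inv a <> gone X) by (intro Ex; apply Hya; apply div1; exact Ex).
  destruct (beta A B _ HR Hx Hnx) as [bx [Hbx [Hnbx Hx']]].
  destruct (beta A B y HR Hy Hny) as [by_ [Hby [Hnby Hy']]].
  assert (Hw : B (by_ ** inv b)) by auto.
  assert (Hyi : M B (y ** inv by_) A).
  { pose proof (M_inv _ _ _ Hy') as P. rewrite inv_mul, inv_inv in P. exact P. }
  assert (Hnw : by_ ** inv b <> gone X).
  { intro Ew. apply div1 in Ew. subst by_. apply Hya.
    apply (F1' A B); auto.
    pose proof (M_comp _ _ _ _ _ Hyi Hab) as P.
    replace ((y ** inv b) ** (b ** inv a)) with (y ** inv a) in P by (gsimpl; reflexivity).
    exact P. }
  destruct (alpha A B _ HR Hw Hnw) as [e [He [Hne Hew]]].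
  assert (Hwe : M A ((by_ ** inv b) ** inv e) B).
  { pose proof (M_inv _ _ _ Hew) as P. rewrite inv_mul, inv_inv in P. exact P. }
  assert (Z1 : conj X bx mu = e ** a).
  { apply (F1' A B); auto. apply HBm; auto.
    pose proof (M_comp _ _ _ _ _ (M_comp _ _ _ _ _ (M_comp _ _ _ _ _ (M_inv _ _ _ HAm) Hx') Hyi) Hwe) as P.
    replace (conj X bx mu ** inv (e ** a)) with
      (((inv mu ** (bx ** inv (y ** inv a))) ** (y ** inv by_)) ** ((by_ ** inv b) ** inv e)).
    exact P. unfold mu, conj. gsimpl. reflexivity. }
  destruct (ii A B _ bx mu HR HS Hx Hnx Hbx Hnbx Hx' HAm HBm) as [k1 [Hk1 Z2]].
  destruct (ii A B e _ mu HR HS He Hne Hw Hnw Hwe HAm HBm) as [k2 [Hk2 Z3]].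
  destruct (ii A B y by_ mu HR HS Hy Hny Hby Hnby Hy' HAm HBm) as [k3 [Hk3 Z5]].
  assert (Z4 : conj X (by_ ** inv b) mu = conj X by_ mu ** a)
    by (rewrite conj_mul, Hbr; reflexivity).
  assert (Ak1 := K_A A B _ HR Hk1). assert (Ak2 := K_A A B _ HR Hk2).
  assert (Ak3 := K_A A B _ HR Hk3).
  assert (Ea : E A B (e ** a) (inv (y ** inv a))).
  { unfold E. rewrite <- Z1, Z2. gsimpl. exact Hk1. }
  assert (E1 : E A B (conj X (by_ ** inv b) mu) (inv e)).
  { unfold E. rewrite Z3. gsimpl. exact Hk2. }
  assert (E2 : E A B (conj X (by_ ** inv b) mu) (inv y ** a)).
  { rewrite Z4, Z5. apply E_mul; auto. unfold E. gsimpl. exact Hk3. apply E_refl. }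
  assert (Eb : E A B (inv e) (inv y ** a)) by (eapply E_trans; [apply E_sym; exact E1| exact E2]).
  assert (Ec : E A B e (inv (y ** inv a) ** inv a)).
  { pose proof (E_mul A B _ _ _ _ HR (Hm _ _ He Ha) (Hi _ Hx) (Hi _ Ha) (Hi _ Ha) Ea (E_refl A B (inv a))) as P.
    replace ((e ** a) ** inv a) with e in P by (gsimpl; reflexivity). exact P. }
  assert (Ed : E A B (inv e) (a ** (y ** inv a))).
  { pose proof (E_inv A B _ _ HR He (Hm _ _ (Hi _ Hx) (Hi _ Ha)) Ec) as P.
    replace (inv (inv (y ** inv a) ** inv a)) with (a ** (y ** inv a)) in P by (gsimpl; reflexivity).
    exact P. }
  assert (Hay : a ** (y ** inv a) = y).
  { rewrite gmulA, (abA A B a y); auto. gsimpl. reflexivity. }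
  rewrite Hay in Ed.
  assert (Ef : E A B y (inv y ** a)) by (eapply E_trans; [apply E_sym; exact Ed | exact Eb]).
  pose proof (E_mul A B _ _ _ _ HR Hy Hy Hy (Hm _ _ (Hi _ Hy) Ha) (E_refl A B y) Ef) as P.
  rewrite mulKV in P. exact P.
Qed.

Lemma pick {X : group} (a1 a2 a3 a4 f1 f2 : X) :
  a1 <> a2 -> a1 <> a3 -> a1 <> a4 -> a2 <> a3 -> a2 <> a4 -> a3 <> a4 ->
  exists p q, (p = a1 \/ p = a2 \/ p = a3 \/ p = a4) /\
              (q = a1 \/ q = a2 \/ q = a3 \/ q = a4) /\
              p <> q /\ p <> f1 /\ p <> f2 /\ q <> f1 /\ q <> f2.
Proof.
  intros.
  destruct (classic (a1 = f1)); destruct (classic (a1 = f2));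
  destruct (classic (a2 = f1)); destruct (classic (a2 = f2));
  destruct (classic (a3 = f1)); destruct (classic (a3 = f2));
  destruct (classic (a4 = f1)); destruct (classic (a4 = f2));
  try congruence;
  first
    [ exists a1, a2; tauto | exists a1, a3; tauto | exists a1, a4; tauto
    | exists a2, a3; tauto | exists a2, a4; tauto | exists a3, a4; tauto ].
Qed.

Theorem theorem1p1 (X : group) (A B : X -> Prop) :
  rank_one X A B -> special X A B -> card_ge4 X A ->
  set_eq X A
    (commsub X A (fun h => normalizer X A h /\ normalizer X B h)).
Proof.
  intros HR HS (a1 & a2 & a3 & a4 & Ha1 & Ha2 & Ha3 & Ha4 & n12 & n13 & n14 & n23 & n24 & n34).
  change (set_eq X A (KK A B)). intro t; split.
  - intro Ht. destruct (classic (t = gone X)) as [Et|Hnt].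
    + rewrite Et. apply K_sub.
    + destruct (pick a1 a2 a3 a4 (gone X) t n12 n13 n14 n23 n24 n34)
        as (p & q & Hp & Hq & Hpq & Hp1 & Hpt & Hq1 & Hqt).
      assert (Ap : A p) by (destruct Hp as [->|[->|[->| ->]]]; auto).
      assert (Aq : A q) by (destruct Hq as [->|[->|[->| ->]]]; auto).
      assert (E1 := Rp A B p t HR HS Ap Ht Hp1 Hnt Hpt).
      assert (E2 := Rp A B p q HR HS Ap Aq Hp1 Hq1 Hpq).
      assert (E3 := Rp A B t q HR HS Ht Aq Hnt Hq1 (fun e => Hqt (eq_sym e))).
      assert (E4 : E A B t q) by (eapply E_trans; [apply E_sym; exact E1 | exact E2]).
      assert (E5 : E A B (t ** t) t) by (eapply E_trans; [exact E3 | apply E_sym; exact E4]).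
      destruct (subA A B HR) as [_ [Hm Hi]].
      pose proof (E_mul A B _ _ _ _ HR (Hm _ _ Ht Ht) Ht (Hi _ Ht) (Hi _ Ht) E5 (E_refl A B (inv t))) as P.
      replace ((t ** t) ** inv t) with t in P by (gsimpl; reflexivity).
      rewrite mulV_r in P. unfold E in P. rewrite inv1, mul1_l in P. exact P.
  - apply K_A; auto.
Qed.
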